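(* Let $\mathscr{A}=\{A_1,\ldots,A_r\}$ be an irreducible set of real $d\times d$ matrices, $\|\cdot\|$ a norm on $\mathbb{R}^d$, and $p\ge d-1$ an integer. Suppose that for some nonzero $x_*\in\mathbb{R}^d$, some word $F\in\mathscr{A}_\infty$ and some $\nu>0$ we have $\|Fx_*\|\ge \nu\|x_*\|$. Then for every nonzero $x\in\mathbb{R}^d$ there is a word $G\in\mathscr{A}_p$ such that $F_x=FG\in\mathscr{A}_\infty$ satisfies $\mathrm{len}(F)\le\mathrm{len}(F_x)\le\mathrm{len}(F)+p$ and \[ \|F_x x\|\ge \nu\,\chi_p(\mathscr{A})\,\|x\|. \]
   Context: Irreducible: the matrices in $\mathscr{A}$ have no common invariant subspace other than $\{0\}$ and $\mathbb{R}^d$. $\mathscr{A}^k$ is the set of products of $k$ matrices from $\mathscr{A}$, $\mathscr{A}^0=\{I\}$. $\mathscr{A}_\infty=\bigcup_{k\ge1}\mathscr{A}^k$; elements are regarded as products $A_{i_q}\cdots A_{i_1}$ of factors from $\mathscr{A}$, and the number $q$ of factors is the length $\mathrm{len}$ (the identity $I\in\mathscr{A}^0$ has length $0$). $\mathscr{A}_p=\bigcup_{k=0}^p\mathscr{A}^k$, $\mathscr{A}_p(x)=\{Ax: A\in\mathscr{A}_p\}$. $\mathbf{S}(t)$ is the closed ball of radius $t$ about $0$ in $\|\cdot\|$. The $p$-measure of irreducibility is $\chi_p(\mathscr{A})=\inf_{\|x\|=1}\sup\{t\ge0:\mathbf{S}(t)\subseteq\mathrm{conv}(\mathscr{A}_p(x)\cup\mathscr{A}_p(-x))\}$.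 *)

(* Defs.v *)
From Stdlib Require Import Reals.
From mathcomp Require Import all_boot.
Set Implicit Arguments. Unset Strict Implicit. Unset Printing Implicit Defensive.
Local Open Scope R_scope.

Definition vec (d : nat) := 'I_d -> R.
Definition mat (d : nat) := 'I_d -> 'I_d -> R.

Definition vzero (d : nat) : vec d := fun _ => 0.
Definition vadd (d : nat) (x y : vec d) : vec d := fun i => x i + y i.
Definition vscale (d : nat) (c : R) (x : vec d) : vec d := fun i => c * x i.
Definition vopp (d : nat) (x : vec d) : vec d := fun i => - x i.

Definition mulmv (d : nat) (A : mat d) (x : vec d) : vec d :=
  fun i => \big[Rplus/0]_(j < d) (A i j * x j).
Definition mulmm (d : nat) (A B : mat d) : mat d :=
  fun i k => \big[Rplus/0]_(j < d) (A i j * B j k).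
Definition idm (d : nat) : mat d := fun i j => if i == j then 1 else 0.

Definition is_norm (d : nat) (N : vec d -> R) : Prop :=
  (forall x, 0 <= N x) /\
  (forall x, N x = 0 -> forall i, x i = 0) /\
  (forall c x, N (vscale c x) = Rabs c * N x) /\
  (forall x y, N (vadd x y) <= N x + N y).

Definition is_subspace (d : nat) (V : vec d -> Prop) : Prop :=
  V (@vzero d) /\
  (forall x y, V x -> V y -> V (vadd x y)) /\
  (forall c x, V x -> V (vscale c x)).

Definition irreducible (d : nat) (As : seq (mat d)) : Prop :=
  forall V : vec d -> Prop, is_subspace V ->
    (forall A x, List.In A As -> V x -> V (mulmv A x)) ->
    (forall x, V x -> forall i, x i = 0) \/ (forall x, V x).

(* words: a list [:: B_1; ...; B_q] of factors from As denotes the product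
   B_q * ... * B_1; its length is size w.  The empty word is I (length 0). *)
Definition is_word (d : nat) (As : seq (mat d)) (w : seq (mat d)) : Prop :=
  forall A, List.In A w -> List.In A As.

Fixpoint wordmat (d : nat) (w : seq (mat d)) : mat d :=
  match w with
  | [::] => @idm d
  | A :: w' => mulmm (wordmat w') A
  end.
(* Note: wordmat (g ++ f) = wordmat f * wordmat g, i.e. the word F G. *)

Definition orbit_pm (d : nat) (As : seq (mat d)) (p : nat) (x : vec d)
  (z : vec d) : Prop :=
  exists w, is_word As w /\ (size w <= p)%N /\
    (z = mulmv (wordmat w) x \/ z = mulmv (wordmat w) (vopp x)).

Definition in_conv (d : nat) (S : vec d -> Prop) (y : vec d) : Prop :=
  exists l : seq (R * vec d),
    (forall c, List.In c l -> 0 <= c.1 /\ S c.2) /\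
    foldr (fun c s => c.1 + s) 0 l = 1 /\
    (forall i, y i = foldr (fun c s => c.1 * c.2 i + s) 0 l).

Definition ball_in_conv (d : nat) (N : vec d -> R) (As : seq (mat d))
  (p : nat) (x : vec d) (t : R) : Prop :=
  0 <= t /\ (forall y, N y <= t -> in_conv (orbit_pm As p x) y).

Definition is_sup (S : R -> Prop) (s : R) : Prop :=
  (forall t, S t -> t <= s) /\ (forall b, (forall t, S t -> t <= b) -> s <= b).
Definition is_inf (S : R -> Prop) (s : R) : Prop :=
  (forall t, S t -> s <= t) /\ (forall b, (forall t, S t -> b <= t) -> b <= s).

Definition chi_p_is (d : nat) (As : seq (mat d)) (N : vec d -> R) (p : nat)
  (c : R) : Prop :=
  is_inf (fun v => exists x, N x = 1 /\ is_sup (ball_in_conv N As p x) v) c.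

Definition vnonzero (d : nat) (x : vec d) : Prop := exists i, x i <> 0.

(* Main.v *)
From HB Require Import structures.
Require Import Defs.
From Stdlib Require Import Reals Lra.
From mathcomp Require Import all_boot.
Local Open Scope R_scope.
Lemma Rpa : associative Rplus. Proof. intros a b c; ring. Qed.
HB.instance Definition _ := Monoid.isComLaw.Build R (IZR 0) Rplus Rpa Rplus_comm Rplus_0_l.
From Stdlib Require Import FunctionalExtensionality Classical.
Set Implicit Arguments. Unset Strict Implicit.

Lemma mulmv_scale d (A : mat d) c v : mulmv A (vscale c v) = vscale c (mulmv A v).
Proof.
apply functional_extensionality => i; rewrite /mulmv /vscale.
rewrite (big_endo (fun s => c * s)); last by ring.
  by apply: eq_bigr => j _; ring.
by move=> a b; ring.
Qed.

Lemma mulmv_add d (A : mat d) u v : mulmv A (vadd u v) = vadd (mulmv A u) (mulmv A v).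
Proof.
apply functional_extensionality => i; rewrite /mulmv /vadd -big_split /=.
by apply: eq_bigr => j _; ring.
Qed.

Lemma mulmv_zero d (A : mat d) : mulmv A (@vzero d) = @vzero d.
Proof.
apply functional_extensionality => i; rewrite /mulmv /vzero.
by rewrite big1 // => j _; ring.
Qed.

Lemma mulmv_mulmm d (A B : mat d) v : mulmv (mulmm A B) v = mulmv A (mulmv B v).
Proof.
apply functional_extensionality => i; rewrite /mulmv /mulmm.
transitivity (\big[Rplus/0]_(j < d) \big[Rplus/0]_(k < d) (A i k * B k j * v j)).
  apply: eq_bigr => j _.
  rewrite (big_endo (fun s => s * v j)) //; last by ring.
  by move=> a b; ring.
rewrite exchange_big /=; apply: eq_bigr => k _.
rewrite (big_endo (fun s => A i k * s)); last by ring.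
  by apply: eq_bigr => j _; ring.
by move=> a b; ring.
Qed.

Lemma mulmv_id d v : mulmv (@idm d) v = v.
Proof.
apply functional_extensionality => i; rewrite /mulmv /idm.
rewrite (bigD1 i) //= eqxx big1 /=; first by ring.
move=> j /negbTE; rewrite eq_sym => ->; ring.
Qed.

Lemma wordmat_cat d (G F : seq (mat d)) v :
  mulmv (wordmat (G ++ F)) v = mulmv (wordmat F) (mulmv (wordmat G) v).
Proof.
elim: G v => [|A G IH] v /=.
  by rewrite mulmv_id.
by rewrite !mulmv_mulmm IH.
Qed.

Definition yv d (l : seq (R * vec d)) : vec d :=
  fun i => foldr (fun c s => c.1 * c.2 i + s) 0 l.

Lemma yv_cons d (c : R * vec d) l : yv (c :: l) = vadd (vscale c.1 c.2) (yv l).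
Proof. by apply functional_extensionality. Qed.

Lemma yv_nil d : yv [::] = @vzero d.
Proof. by apply functional_extensionality. Qed.

Lemma norm_zero d (N : vec d -> R) : is_norm N -> N (@vzero d) = 0.
Proof.
move=> [_ [_ [Hs _]]].
have -> : @vzero d = vscale 0 (@vzero d).
  by apply functional_extensionality => i; rewrite /vscale /vzero; ring.
by rewrite Hs Rabs_R0; ring.
Qed.

Lemma norm_opp d (N : vec d -> R) v : is_norm N -> N (vopp v) = N v.
Proof.
move=> [_ [_ [Hs _]]].
have -> : vopp v = vscale (-1) v.
  by apply functional_extensionality => i; rewrite /vscale /vopp; ring.
by rewrite Hs Rabs_Ropp Rabs_R1; ring.
Qed.

Lemma norm_yvA d (N : vec d -> R) (A : mat d) l : is_norm N ->
  (forall c, List.In c l -> 0 <= c.1) ->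
  N (mulmv A (yv l)) <= foldr (fun c s => c.1 * N (mulmv A c.2) + s) 0 l.
Proof.
move=> HN; elim: l => [|c l IH] Hl /=.
  by rewrite yv_nil mulmv_zero norm_zero //; apply: Rle_refl.
rewrite yv_cons mulmv_add mulmv_scale.
have H0 : 0 <= c.1 by apply: Hl; left.
have H1 := IH (fun c' h => Hl c' (or_intror h)).
case: HN => [_ [_ [Hs Ht]]].
apply: Rle_trans; first by apply: Ht.
rewrite Hs Rabs_pos_eq //; lra.
Qed.

Lemma exists_max (T : Type) (a : T -> R) (l : seq T) : l <> [::] ->
  exists c, List.In c l /\ forall c', List.In c' l -> a c' <= a c.
Proof.
elim: l => [|c l IH] // _.
case: l IH => [|c2 l] IH.
  exists c; split; first by left.
  by move=> c' [->|[]]; apply: Rle_refl.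
case: IH => // m [Hm Hmax].
case: (Rle_lt_dec (a c) (a m)) => h.
  exists m; split; first by right.
  move=> c' [<-|h'] //; by apply: Hmax.
exists c; split; first by left.
move=> c' [<-|h']; first by apply: Rle_refl.
apply: Rle_trans; [by apply: Hmax | lra].
Qed.

Lemma weighted d (a : R * vec d -> R) l M :
  (forall c, List.In c l -> 0 <= c.1) -> (forall c, List.In c l -> a c <= M) ->
  foldr (fun c s => c.1 * a c + s) 0 l <= M * foldr (fun c s => c.1 + s) 0 l.
Proof.
elim: l => [|c l IH] H0 HM /=; first lra.
have h1 := IH (fun c' h => H0 c' (or_intror h)) (fun c' h => HM c' (or_intror h)).
have h2 : 0 <= c.1 by apply: H0; left.
have h3 : a c <= M by apply: HM; left.
have : c.1 * a c <= c.1 * M by apply: Rmult_le_compat_l.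
lra.
Qed.

Lemma conv_max d (N : vec d -> R) (A : mat d) (S : vec d -> Prop) y :
  is_norm N -> in_conv S y -> exists z, S z /\ N (mulmv A y) <= N (mulmv A z).
Proof.
move=> HN [l [Hl [H1 Hy]]].
have -> : y = yv l by apply functional_extensionality.
have Hne : l <> [::] by move=> E; rewrite E /= in H1; lra.
have [m [Hm Hmax]] := exists_max (fun c => N (mulmv A c.2)) Hne.
exists m.2; split; first by case: (Hl m Hm).
have Hp : forall c, List.In c l -> 0 <= c.1 by move=> c h; case: (Hl c h).
apply: Rle_trans; first by apply: (norm_yvA A HN Hp).
have := @weighted d (fun c => N (mulmv A c.2)) l _ Hp Hmax.
rewrite H1 /=; lra.
Qed.

Lemma fin_max (T : Type) (l : list T) (g : T -> R -> Prop) B :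
  (forall A M M', M <= M' -> g A M -> g A M') ->
  (forall A, List.In A l -> exists M, M < B /\ g A M) ->
  exists M, M < B /\ forall A, List.In A l -> g A M.
Proof.
move=> Hmon; elim: l => [|a l IH] H.
  by exists (B - 1); split; [lra | move=> A []].
have [M1 [HM1 Hg1]] := H a (or_introl erefl).
have [M2 [HM2 Hg2]] := IH (fun A h => H A (or_intror h)).
exists (Rmax M1 M2); split; first by apply: Rmax_lub_lt.
move=> A [<-|h].
  by apply: Hmon (Hg1); apply: Rmax_l.
by apply: Hmon (Hg2 A h); apply: Rmax_r.
Qed.

Lemma words_max d (As : seq (mat d)) k : forall (f : seq (mat d) -> R) B,
  (forall w, is_word As w -> (size w <= k)%N -> f w < B) ->
  exists M, M < B /\ forall w, is_word As w -> (size w <= k)%N -> f w <= M.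
Proof.
elim: k => [|k IH] f B H.
  exists (f [::]); split; first by apply: H => //; move=> A [].
  by case=> [|A w] //= _ _; apply: Rle_refl.
have [M1 [HM1 Hg]] := @fin_max _ As
  (fun A M => forall w, is_word As w -> (size w <= k)%N -> f (A :: w) <= M) B
  ltac:(move=> A M M' h1 h2 w hw hs; apply: Rle_trans h1; exact: h2)
  ltac:(move=> A hA; apply: (IH (fun w => f (A :: w)) B) => w hw hs;
        apply: H => //; move=> A' [<-|h] //; exact: hw).
have H0 : f [::] < B by apply: H => //; move=> A [].
exists (Rmax M1 (f [::])); split; first by apply: Rmax_lub_lt.
case=> [|A w] hw hs; first by apply: Rmax_r.
apply: Rle_trans (Rmax_l _ _); apply: (Hg A).
- by apply: hw; left.
- by move=> A' h; apply: hw; right.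
- by [].
Qed.

Lemma normpos d (N : vec d -> R) v : is_norm N -> vnonzero v -> 0 < N v.
Proof.
move=> [H0 [Hz _]] [i Hi].
case: (H0 v) => // h; exfalso; apply: Hi; exact: Hz.
Qed.

Theorem lemma2 (d : nat) (As : seq (mat d)) (N : vec d -> R) (p : nat)
  (chi : R) :
  irreducible As -> is_norm N -> (d - 1 <= p)%N -> chi_p_is As N p chi ->
  forall (xs : vec d) (F : seq (mat d)) (nu : R),
    vnonzero xs -> is_word As F -> (1 <= size F)%N -> 0 < nu ->
    N (mulmv (wordmat F) xs) >= nu * N xs ->
  forall x : vec d, vnonzero x ->
    exists G : seq (mat d),
      is_word As G /\ (size G <= p)%N /\
      (size F <= size (G ++ F) <= size F + p)%N /\
      N (mulmv (wordmat (G ++ F)) x) >= nu * chi * N x.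
Proof.
move=> _ HN _ Hchi xs F nu Hxs HF _ Hnu HFx x Hx.
have Nx := normpos HN Hx.
have Nxs := normpos HN Hxs.
have HN' := HN; case: HN' => [Hnn [Hz [Hs Htr]]].
pose x0 := vscale (/ N x) x.
have Nx0 : N x0 = 1.
  rewrite /x0 Hs Rabs_pos_eq; last by apply: Rlt_le; apply: Rinv_0_lt_compat.
  by field; lra.
pose f := fun G => N (mulmv (wordmat F) (mulmv (wordmat G) x0)).
pose E := ball_in_conv N As p x0.
have E0 : E 0.
  split; first by apply: Rle_refl.
  move=> y Hy.
  have Hy0 : N y = 0 by have := Hnn y; lra.
  exists [:: (/2, mulmv (wordmat [::]) x0); (/2, mulmv (wordmat [::]) (vopp x0))].
  split; last split.
  - move=> c [<-|[<-|[]]]; (split; first by simpl; lra);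
      exists [::]; (split; first by move=> A []); split=> //; by [left|right].
  - simpl; field.
  - move=> i /=; rewrite !mulmv_id (Hz _ Hy0 i) /vopp; field.
have Step : forall t, t < chi -> exists t', E t' /\ t < t'.
  move=> t Ht; apply: NNPP => Hn.
  have Hub : forall t', E t' -> t' <= t.
    move=> t' Et'; case: (Rle_lt_dec t' t) => // h; exfalso; apply: Hn.
    by exists t'.
  have [m [Hm1 Hm2]] := completeness E (ex_intro _ t Hub) (ex_intro _ 0 E0).
  have Hsup : is_sup E m by split; [exact: Hm1 | exact: Hm2].
  have : chi <= m by apply: (proj1 Hchi); exists x0; split.
  have : m <= t by apply: Hm2.
  lra.
have StepA : forall t, t < chi -> exists G, is_word As G /\ (size G <= p)%N /\
    t * nu <= f G.
  move=> t Ht; have [t' [[Ht'0 Et'] Htt']] := Step t Ht.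
  pose y := vscale (t' / N xs) xs.
  have Hc : 0 <= t' / N xs by apply: Rmult_le_pos => //; apply: Rlt_le; apply: Rinv_0_lt_compat.
  have Ny : N y = t' by rewrite /y Hs Rabs_pos_eq //; field; lra.
  have [z [[w [Hw [Hsz Hzw]]] Hle]] :=
    conv_max (wordmat F) HN (Et' y (Req_le _ _ Ny)).
  exists w; split=> //; split=> //.
  have Hfz : N (mulmv (wordmat F) z) = f w.
    case: Hzw => -> //.
    have -> : vopp x0 = vscale (-1) x0.
      by apply functional_extensionality => i; rewrite /vscale /vopp; ring.
    rewrite (mulmv_scale (wordmat w) (-1) x0) (mulmv_scale (wordmat F) (-1)) Hs.
    have -> : Rabs (-1) = 1 by rewrite Rabs_left; lra.
    by rewrite Rmult_1_l.
  rewrite -Hfz; apply: Rle_trans Hle.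
  rewrite /y mulmv_scale Hs Rabs_pos_eq //.
  have : t' / N xs * (nu * N xs) <= t' / N xs * N (mulmv (wordmat F) xs).
    by apply: Rmult_le_compat_l => //; lra.
  have -> : t' / N xs * (nu * N xs) = t' * nu by field; lra.
  have : t * nu < t' * nu by apply: Rmult_lt_compat_r.
  lra.
have [G [HG [HGs HfG]]] : exists G, is_word As G /\ (size G <= p)%N /\
    chi * nu <= f G.
  apply: NNPP => Hn.
  have [M [HM HMb]] := @words_max d As p f (chi * nu)
    ltac:(move=> w hw hs; case: (Rle_lt_dec (chi * nu) (f w)) => // h;
          exfalso; apply: Hn; by exists w).
  have Ht : (M / nu + chi) / 2 < chi.
    have : M / nu < chi.
      apply: (Rmult_lt_reg_r nu) => //; have -> : M / nu * nu = M by field; lra.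
      lra.
    lra.
  have [G [HG [HGs HfG]]] := StepA _ Ht.
  have := HMb G HG HGs.
  have Heq : (M / nu + chi) / 2 * nu = (M + chi * nu) / 2 by field; lra.
  lra.
exists G; split=> //; split=> //; split.
  by rewrite size_cat leq_addl /= addnC leq_add2l.
have -> : x = vscale (N x) x0.
  apply functional_extensionality => i; rewrite /x0 /vscale; field; lra.
rewrite wordmat_cat (mulmv_scale (wordmat G) (N x) x0) (mulmv_scale (wordmat F)) Hs Rabs_pos_eq; last lra.
rewrite -/(f G).
apply: Rle_ge.
rewrite Hs Nx0 Rabs_pos_eq; last lra.
have -> : nu * chi * (N x * 1) = N x * (chi * nu) by ring.
by apply: Rmult_le_compat_l; lra.
Qed.
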